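(* Let $G$ be a graph and $X,Y\subseteq V(G)$ disjoint such that $(X,Y)$ is induced $M_2$-free. Then for every integer $r\ge1$ there is an equipartition $X=X_1\cup\dots\cup X_r$ and a partition $Y=Y_1\cup\dots\cup Y_{r+1}$ (parts possibly empty) such that $(X_i,Y_j)$ is homogeneous for every $1\le i\le r$ and $1\le j\le r+1$ with $i\ne j$.
   Context: For disjoint $X,Y\subseteq V(G)$, an induced copy of $M_2$ in $(X,Y)$ is an unordered quadruple $x,x',y,y'$ with $x,x'\in X$, $y,y'\in Y$, $(x,y),(x',y')\in E(G)$ and $(x,y'),(x',y)\notin E(G)$; $(X,Y)$ is induced $M_2$-free if it contains no such copy. A pair $(A,B)$ of disjoint vertex sets is homogeneous if the bipartite graph of $G$ between $A$ and $B$ is complete or empty. A partition $\{P_1,\dots,P_r\}$ is an equipartition if $||P_i|-|P_j||\le1$ for all $i,j$. *)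

(* Defs.v *)
From mathcomp Require Import all_boot.
Set Implicit Arguments. Unset Strict Implicit. Unset Printing Implicit Defensive.

Definition simple_graph (T : finType) (e : rel T) : Prop :=
  symmetric e /\ irreflexive e.

Definition induced_M2_free (T : finType) (e : rel T) (X Y : {set T}) : Prop :=
  ~ exists x x' y y',
      [/\ x \in X, x' \in X, y \in Y & y' \in Y] /\
      [/\ e x y, e x' y', ~~ e x y' & ~~ e x' y].

Definition homogeneous (T : finType) (e : rel T) (A B : {set T}) : Prop :=
  (forall a b, a \in A -> b \in B -> e a b) \/
  (forall a b, a \in A -> b \in B -> ~~ e a b).

Definition is_partition_of (T : finType) (n : nat) (P : 'I_n -> {set T})
    (S : {set T}) : Prop :=
  (forall i j, i != j -> [disjoint P i & P j]) /\
  \bigcup_(i < n) P i = S.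

Definition is_equipartition_of (T : finType) (n : nat) (P : 'I_n -> {set T})
    (S : {set T}) : Prop :=
  is_partition_of P S /\ (forall i j, #|P i| <= (#|P j|).+1).

(* Main.v *)
Require Import Defs.
From mathcomp Require Import all_boot.
From mathcomp Require Import zify.
Set Implicit Arguments. Unset Strict Implicit. Unset Printing Implicit Defensive.

Lemma count_iota_int a b m : b <= m ->
  count (fun k => (a <= k) && (k < b)) (iota 0 m) = b - a.
Proof.
elim: m b => [|m IH] b hb.
  by move: hb; rewrite leqn0 => /eqP ->.
rewrite -addn1 iotaD count_cat /= add0n addn0.
case: (ltnP b m.+1) => hbm.
  rewrite IH //.
  by rewrite andbF addn0.
have eb : b = m.+1 by apply/eqP; rewrite eqn_leq hb hbm.
subst b.
rewrite (@eq_in_count _ _ (fun k => (a <= k) && (k < m))); last first.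
  by move=> k; rewrite mem_iota add0n => /andP[_ hk]; rewrite hk ltnS (ltnW hk).
rewrite IH // andbT.
case: (leqP a m) => h /=; lia.
Qed.

Lemma count_index (U : eqType) (s : seq U) (a b : nat) : uniq s -> b <= size s ->
  count (fun x => (a <= index x s) && (index x s < b)) s = b - a.
Proof.
case: s => [|x0 s'] us hb.
  by move: hb; rewrite leqn0 => /eqP ->.
set t := x0 :: s' in us hb *.
rewrite -{3}(mkseq_nth x0 t) /mkseq count_map.
rewrite (@eq_in_count _ _ (fun k => (a <= k) && (k < b))); first exact: count_iota_int.
move=> k; rewrite mem_iota add0n => /andP[_ hk].
change (((a <= index (nth x0 t k) t) && (index (nth x0 t k) t < b)) = ((a <= k) && (k < b))).
by rewrite (index_uniq x0 hk us).
Qed.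

Lemma disjP (T : finType) (A B : {set T}) :
  (forall x, x \in A -> x \in B -> False) -> [disjoint A & B].
Proof.
move=> h; rewrite disjoint_subset; apply/subsetP => x hx.
by rewrite inE; apply/negP => hx'; exact: h x hx hx'.
Qed.

Section Aux.
Variables (T : finType) (e : rel T) (X Y : {set T}).
Definition Nb x := [set y in Y | e x y].

Lemma chain x z : induced_M2_free e X Y -> x \in X -> z \in X ->
  (Nb x \subset Nb z) || (Nb z \subset Nb x).
Proof.
move=> hM hx hz.
case: (boolP (Nb x \subset Nb z)) => //= /subsetPn [y1 y1x y1z].
apply/negPn/negP => /subsetPn [y2 y2z y2x].
apply: hM; exists x, z, y1, y2.
move: y1x y1z y2z y2x; rewrite !inE.
move=> /andP[Y1 e1]; rewrite Y1 /= => ne1 /andP[Y2 e2]; rewrite Y2 /= => ne2.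
by split; [split|split].
Qed.
End Aux.

Theorem lemma2p2 (T : finType) (e : rel T) (X Y : {set T}) (r : nat) :
  simple_graph e ->
  [disjoint X & Y] ->
  induced_M2_free e X Y ->
  1 <= r ->
  exists (P : 'I_r -> {set T}) (Q : 'I_r.+1 -> {set T}),
    [/\ is_equipartition_of P X,
        is_partition_of Q Y &
        forall (i : 'I_r) (j : 'I_r.+1),
          (nat_of_ord i != nat_of_ord j) -> homogeneous e (P i) (Q j)].
Proof.
move=> _ _ hM.
case: r => [//|r'] _.
pose n := #|X|.
pose leT := fun x x' : T => #|Nb e Y x'| <= #|Nb e Y x|.
pose s := sort leT (enum X).
have leT_tot : total leT by move=> a b; rewrite /leT leq_total.
have leT_tr : transitive leT.
  by move=> b a c; rewrite /leT => h1 h2; exact: leq_trans h2 h1.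
have s_sorted : sorted leT s := sort_sorted leT_tot _.
have s_perm : perm_eq s (enum X) := permEl (perm_sort _ _).
have s_uniq : uniq s by rewrite (perm_uniq s_perm) enum_uniq.
have memS x : (x \in s) = (x \in X) by rewrite (perm_mem s_perm) mem_enum.
have sizeS : size s = n by rewrite (perm_size s_perm) /n cardE.
pose p y := find (fun x => ~~ e x y) s.
have key x y : x \in X -> y \in Y -> e x y = (index x s < p y).
  move=> hx hy; have xs : x \in s by rewrite memS.
  case: ltnP => hk.
    by have := before_find x hk; rewrite nth_index // => /negbFE.
  apply/negbTE/negP => exy.
  have hfs : p y < size s by apply: leq_ltn_trans hk _; rewrite index_mem.
  have hhas : has (fun x => ~~ e x y) s by rewrite has_find.
  have nz : ~~ e (nth x s (p y)) y := nth_find x hhas.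
  set z := nth x s (p y) in nz.
  have zX : z \in X by rewrite -memS mem_nth.
  have sub : Nb e Y x \subset Nb e Y z.
    move: hk; rewrite leq_eqVlt => /orP [/eqP eqk | ltk].
      by rewrite /z eqk nth_index.
    have hle : leT z x.
      rewrite -{1}(nth_index x xs).
      apply: (sorted_ltn_nth leT_tr x s_sorted) => //; rewrite inE //.
      by rewrite index_mem.
    case/orP: (chain hM hx zX) => // hzx.
    have /eqP -> // : Nb e Y z == Nb e Y x by rewrite eqEcard hzx; exact: hle.
  have : y \in Nb e Y z by apply: (subsetP sub); rewrite inE hy exy.
  by rewrite inE (negbTE nz) andbF.
set r := r'.+1.
have r0 : 0 < r by [].
pose c i := i * n %/ r.
have c_mono i j : i <= j -> c i <= c j.
  by move=> h; apply: leq_div2r; apply: leq_mul.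
have c_r : c r = n by rewrite /c mulKn.
have c_0 : c 0 = 0 by rewrite /c mul0n div0n.
have c_S i : c i.+1 = c i + n %/ r + (r <= i * n %% r + n %% r).
  by rewrite /c mulSn addnC divnD.
pose P (i : 'I_r) := [set x in X | (c i <= index x s) && (index x s < c i.+1)].
pose jf y : 'I_r.+1 := [arg max_(i > ord0 | c i <= p y) i].
pose Q (j : 'I_r.+1) := [set y in Y | jf y == j].
have cardP (i : 'I_r) : #|P i| = c i.+1 - c i.
  have -> : P i = [set x in filter (fun x => (c i <= index x s) && (index x s < c i.+1)) s].
    by apply/setP => x; rewrite !inE mem_filter memS andbC.
  rewrite cardsE (card_uniqP _) ?filter_uniq // size_filter count_index //.
  by rewrite sizeS -c_r c_mono.
exists P, Q; split.
- split; last first.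
    move=> i j; rewrite !cardP !c_S.
    case: (r <= _ + _); case: (r <= _ + _); lia.
  split.
    move=> i j hij; apply: disjP => x; rewrite !inE.
    move=> /andP[_ /andP[h1 h2]] /andP[_ /andP[h3 h4]].
    case: (ltngtP i j) => hl.
    + have := c_mono _ _ hl; lia.
    + have := c_mono _ _ hl; lia.
    + have ij : i = j by apply: val_inj.
      by move: hij; rewrite ij eqxx.
  apply/setP => x; apply/bigcupP/idP.
    by case=> i _; rewrite inE => /andP[].
  move=> hx.
  have hk : index x s < n by rewrite -sizeS index_mem memS.
  case: (@arg_maxnP _ (@ord0 r') (fun i : 'I_r => c i <= index x s) val).
    by rewrite /= c_0.
  move=> i hi hmax; exists i => //; rewrite inE hx hi /=.
  case: (ltnP i.+1 r) => hir.
    rewrite ltnNge; apply/negP => hc.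
    by have := hmax (Ordinal hir) hc; rewrite /= ltnn.
  have -> : i.+1 = r by apply/eqP; rewrite eqn_leq hir ltn_ord.
  by rewrite c_r.
- split.
    move=> i j hij; apply: disjP => y; rewrite !inE.
    by move=> /andP[_ /eqP ->] /andP[_ /eqP h]; move: hij; rewrite h eqxx.
  apply/setP => y; apply/bigcupP/idP.
    by case=> j _; rewrite inE => /andP[].
  by move=> hy; exists (jf y) => //; rewrite inE hy eqxx.
- move=> i j hij.
  have jfP y : c (jf y) <= p y /\ forall i' : 'I_r.+1, c i' <= p y -> i' <= jf y.
    rewrite /jf; case: (@arg_maxnP _ (@ord0 r) (fun i : 'I_r.+1 => c i <= p y) val).
      by rewrite /= c_0.
    by move=> k hk hm; split.
  case: (ltngtP i j) => hl.
  + left => a b; rewrite !inE => /andP[ha /andP[_ h2]] /andP[hb /eqP hj].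
    rewrite key //; have [hc _] := jfP b; rewrite hj in hc.
    have := c_mono _ _ hl; lia.
  + right => a b; rewrite !inE => /andP[ha /andP[h1 _]] /andP[hb /eqP hj].
    rewrite key // -leqNgt; have [_ hm] := jfP b.
    case: (leqP (c i) (p b)) => hc; last by lia.
    have := hm (widen_ord (leqnSn r) i) hc; rewrite hj /=; lia.
  + by move: hij; rewrite hl eqxx.
Qed.
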